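(* For any $\varepsilon>0$ there exists a two-player extensive-form game $\Gamma$ such that $\Gamma$ has, up to realization equivalence, a unique CDT equilibrium, and such that for every CDT equilibrium $\pi$ of $\Gamma$, every CDT equilibrium $\pi'$ of $\mathrm{pr}_1(\Gamma)$, and both players $i\in\{1,2\}$, $U_i(\pi')/U_i(\pi)\le\varepsilon$. In particular, $\mathrm{VoR}^{\mathrm{SC}}(\Gamma)=0$ for every $\mathrm{SC}\in\{\mathrm{wCDT},\mathrm{bCDT},\mathrm{wEDT},\mathrm{bEDT},\mathrm{wNash},\mathrm{bNash}\}$.
   Context: An extensive-form game consists of a finite rooted tree (nodes $\mathcal H$, leaves $\mathcal Z$, actions $A_h$), players $\mathcal N$ plus chance, an assignment of nonterminal nodes to players or chance, chance distributions, utilities $u_i:\mathcal Z\to\mathbb R_{\ge0}$, and for each $i$ a partition $\mathcal I_i$ of its nodes into infosets with common action sets $A_I$. For a node $h$, $\mathrm{obs}_1(h)$ is the sequence of (infoset, action) pairs at Player 1's nodes on the root-to-$h$ path (excluding $h$). $\mathrm{pr}_1(\Gamma)$ has the same tree and utilities as $\Gamma$, with each $I\in\mathcal I_1$ partitioned into the classes of $h\sim h'\iff\mathrm{obs}_1(h)=\mathrm{obs}_1(h')$ (computed in $\Gamma$) and other players' infosets unchanged. A behavioral strategy $\pi_i$ assigns $\pi_i(\cdot\mid I)\in\Delta(A_I)$ to each $I\in\mathcal I_i$; $S_i$ is the set of these; $U_i(\pi)=\sum_z\mathbb P(z\mid\pi)u_i(z)$ with $\mathbb P(z\mid\pi)$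 the reach probability of $z$. Profiles are realization-equivalent if they induce the same reach probabilities at all nodes. $\pi_i^{I\mapsto\sigma}$ plays $\sigma$ at $I$ and as $\pi_i$ elsewhere. Nash equilibrium: each $\pi_i\in\arg\max_{\pi_i'}U_i(\pi_i',\pi_{-i})$. EDT equilibrium: for all $i$, $I\in\mathcal I_i$, $\pi_i(\cdot\mid I)\in\arg\max_{\sigma\in\Delta(A_I)}U_i(\pi_i^{I\mapsto\sigma},\pi_{-i})$. CDT equilibrium: each $\pi_i$ is a Karush–Kuhn–Tucker point of maximizing $U_i(\cdot,\pi_{-i})$ over $S_i=\prod_I\Delta(A_I)$. For X in {Nash, EDT, CDT}, $u_1(\mathrm{bX}(\Gamma))$ / $u_1(\mathrm{wX}(\Gamma))$ is the max / min of $U_1$ over X equilibria of $\Gamma$; $\mathrm{VoR}^{\mathrm{SC}}(\Gamma)=u_1(\mathrm{SC}(\mathrm{pr}_1(\Gamma)))/u_1(\mathrm{SC}(\Gamma))$. *)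

(* Defs.v *)
From Stdlib Require Import Reals Lra List Arith.
From Coquelicot Require Import Coquelicot.
Import ListNotations.
Open Scope R_scope.

Inductive player := P1 | P2.

Definition player_eq_dec (i j : player) : {i = j} + {i <> j}.
Proof. decide equality. Defined.

(** Finite rooted trees.  Actions at a node are the indices
    0, ..., (number of children - 1).  Player nodes carry an infoset label
    of type [L]; all nodes with the same label form one infoset. *)
Inductive tree (L : Type) : Type :=
| Leaf : R -> R -> tree L                         (* utilities u_1, u_2 *)
| Chance : list (R * tree L) -> tree L            (* (probability, child) *)
| Dec : player -> L -> list (tree L) -> tree L.

Arguments Leaf {L} _ _.
Arguments Chance {L} _.
Arguments Dec {L} _ _ _.

Record game := Game {
  lab : Type;
  lab_dec : forall x y : lab, {x = y} + {x <> y};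
  root : tree lab
}.

(** Nodes are addressed by paths (sequences of action indices) from the root. *)
Fixpoint subtree {L} (t : tree L) (p : list nat) : option (tree L) :=
  match p with
  | [] => Some t
  | k :: p' =>
    match t with
    | Leaf _ _ => None
    | Chance bs => match nth_error bs k with
                   | Some (_, c) => subtree c p'
                   | None => None end
    | Dec _ _ ch => match nth_error ch k with
                    | Some c => subtree c p'
                    | None => None end
    end
  end.

Definition is_node (G : game) (p : list nat) : Prop :=
  exists t, subtree (root G) p = Some t.

Definition is_infoset (G : game) (i : player) (I : lab G) (n : nat) : Prop :=
  exists p ch, subtree (root G) p = Some (Dec i I ch) /\ length ch = n.

Definition sumR (l : list R) : R := fold_right Rplus 0 l.

Definition sum_lt (n : nat) (f : nat -> R) : R := sumR (map f (seq 0 n)).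

Definition wf_game (G : game) : Prop :=
  (forall p o I ch, subtree (root G) p = Some (Dec o I ch) -> ch <> []) /\
  (forall p bs, subtree (root G) p = Some (Chance bs) ->
     List.Forall (fun qc => 0 <= fst qc) bs /\ sumR (map fst bs) = 1) /\
  (forall p u1 u2, subtree (root G) p = Some (Leaf u1 u2) -> 0 <= u1 /\ 0 <= u2) /\
  (forall p1 p2 o1 o2 I ch1 ch2,
     subtree (root G) p1 = Some (Dec o1 I ch1) ->
     subtree (root G) p2 = Some (Dec o2 I ch2) ->
     o1 = o2 /\ length ch1 = length ch2).

Fixpoint leaves {L} (t : tree L) : list (list nat * (R * R)) :=
  match t with
  | Leaf u1 u2 => [([], (u1, u2))]
  | Chance bs =>
    (fix go (k : nat) (bs : list (R * tree L)) :=
       match bs with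
       | [] => []
       | (_, c) :: bs' =>
           map (fun zu => (k :: fst zu, snd zu)) (leaves c) ++ go (S k) bs'
       end) 0%nat bs
  | Dec _ _ ch =>
    (fix go (k : nat) (ch : list (tree L)) :=
       match ch with
       | [] => []
       | c :: ch' =>
           map (fun zu => (k :: fst zu, snd zu)) (leaves c) ++ go (S k) ch'
       end) 0%nat ch
  end.

(** Strategy profiles: [pi i I a] is the probability player [i] assigns to
    action [a] at infoset [I]. Values outside of player [i]'s infosets and
    action ranges are irrelevant. *)
Definition profile (G : game) := player -> lab G -> nat -> R.

Fixpoint reach {L} (pi : player -> L -> nat -> R) (t : tree L) (p : list nat) : R :=
  match p with
  | [] => 1
  | k :: p' =>
    match t with
    | Leaf _ _ => 0
    | Chance bs => match nth_error bs k with
                   | Some (q, c) => q * reach pi c p'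
                   | None => 0 end
    | Dec o J ch => match nth_error ch k with
                    | Some c => pi o J k * reach pi c p'
                    | None => 0 end
    end
  end.

Definition util (i : player) (u : R * R) : R :=
  match i with P1 => fst u | P2 => snd u end.

Definition U (G : game) (i : player) (pi : profile G) : R :=
  sumR (map (fun zu => reach pi (root G) (fst zu) * util i (snd zu))
            (leaves (root G))).

Definition is_distr (n : nat) (s : nat -> R) : Prop :=
  (forall a, (a < n)%nat -> 0 <= s a) /\ sum_lt n s = 1.

Definition behavioral (G : game) (i : player) (s : lab G -> nat -> R) : Prop :=
  forall I n, is_infoset G i I n -> is_distr n (s I).

Definition valid_profile (G : game) (pi : profile G) : Prop :=
  forall i, behavioral G i (pi i).

Definition set_player (G : game) (pi : profile G) (i : player)
  (s : lab G -> nat -> R) : profile G :=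
  fun j => if player_eq_dec j i then s else pi j.

Definition set_infoset (G : game) (pi : profile G) (i : player) (I : lab G)
  (sigma : nat -> R) : profile G :=
  set_player G pi i (fun J => if lab_dec G J I then sigma else pi i J).

Definition set_coord (G : game) (pi : profile G) (i : player) (I : lab G)
  (a : nat) (t : R) : profile G :=
  set_infoset G pi i I (fun b => if Nat.eq_dec b a then t else pi i I b).

Definition realization_equiv (G : game) (pi pi' : profile G) : Prop :=
  forall p, is_node G p -> reach pi (root G) p = reach pi' (root G) p.

Definition nash_eq (G : game) (pi : profile G) : Prop :=
  valid_profile G pi /\
  forall i s, behavioral G i s -> U G i (set_player G pi i s) <= U G i pi.

Definition edt_eq (G : game) (pi : profile G) : Prop :=
  valid_profile G pi /\
  forall i I n, is_infoset G i I n ->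
    forall sigma, is_distr n sigma ->
      U G i (set_infoset G pi i I sigma) <= U G i pi.

(** KKT point of maximizing U_i(., pi_{-i}) over S_i = prod_I Delta(A_I),
    the constraints being pi_i(a|I) >= 0 and sum_a pi_i(a|I) = 1.
    Partial derivatives are taken of the polynomial U_i viewed as a function
    of the coordinates pi_i(a|I). *)
Definition KKT_point (G : game) (i : player) (pi : profile G) : Prop :=
  behavioral G i (pi i) /\
  exists (lam : lab G -> R) (mu : lab G -> nat -> R),
    forall I n, is_infoset G i I n ->
      forall a, (a < n)%nat ->
        0 <= mu I a /\ mu I a * pi i I a = 0 /\
        Derive (fun t => U G i (set_coord G pi i I a t)) (pi i I a)
          = lam I - mu I a.

Definition cdt_eq (G : game) (pi : profile G) : Prop :=
  forall i, KKT_point G i pi.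

(** Player 1's infoset I is refined by obs_1; the new label of a Player-1 node
    is (I, obs_1(h)).  Player 2's infosets are unchanged (label (I, [])). *)
Fixpoint pr1_tree {L} (obs : list (L * nat)) (t : tree L) : tree (L * list (L * nat)) :=
  match t with
  | Leaf u1 u2 => Leaf u1 u2
  | Chance bs =>
    Chance ((fix go (bs : list (R * tree L)) :=
               match bs with
               | [] => []
               | (q, c) :: bs' => (q, pr1_tree obs c) :: go bs'
               end) bs)
  | Dec P1 J ch =>
    Dec P1 (J, obs)
      ((fix go (k : nat) (ch : list (tree L)) :=
          match ch with
          | [] => []
          | c :: ch' => pr1_tree (obs ++ [(J, k)]) c :: go (S k) ch'
          end) 0%nat ch)
  | Dec P2 J ch =>
    Dec P2 (J, [])
      ((fix go (ch : list (tree L)) :=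
          match ch with
          | [] => []
          | c :: ch' => pr1_tree obs c :: go ch'
          end) ch)
  end.

Definition pr1_lab_dec (G : game) :
  forall x y : lab G * list (lab G * nat), {x = y} + {x <> y}.
Proof.
  pose proof (lab_dec G) as d.
  assert (dp : forall x y : lab G * nat, {x = y} + {x <> y}).
  { intros [a b] [c e]; destruct (d a c), (Nat.eq_dec b e); subst;
      [left; reflexivity | right; congruence | right; congruence | right; congruence]. }
  intros [a l] [c l'].
  destruct (d a c), (list_eq_dec dp l l'); subst;
    [left; reflexivity | right; congruence | right; congruence | right; congruence].
Defined.

Definition pr1 (G : game) : game :=
  Game (lab G * list (lab G * nat)) (pr1_lab_dec G) (pr1_tree [] (root G)).

Inductive sol_concept := wCDT | bCDT | wEDT | bEDT | wNash | bNash.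

Definition sc_eq (SC : sol_concept) : forall G : game, profile G -> Prop :=
  match SC with
  | wCDT | bCDT => cdt_eq
  | wEDT | bEDT => edt_eq
  | wNash | bNash => nash_eq
  end.

Definition sc_best (SC : sol_concept) : bool :=
  match SC with bCDT | bEDT | bNash => true | _ => false end.

(** [sc_value SC G v]: v = u_1(SC(G)), i.e. v is the max (for bX) / min (for wX)
    of U_1 over the X equilibria of G (in particular this value is attained). *)
Definition sc_value (SC : sol_concept) (G : game) (v : R) : Prop :=
  (exists pi, sc_eq SC G pi /\ U G P1 pi = v) /\
  (forall pi, sc_eq SC G pi ->
     if sc_best SC then U G P1 pi <= v else v <= U G P1 pi).

Definition VoR (SC : sol_concept) (G : game) (r : R) : Prop :=
  exists v v', sc_value SC G v /\ sc_value SC (pr1 G) v' /\ v <> 0 /\ r = v' / v.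

(* Main.v *)
Require Import Defs.
From Stdlib Require Import Reals.
From Stdlib Require Import Lra Psatz List Bool.
From Coquelicot Require Import Coquelicot.
Import ListNotations.
Open Scope R_scope.

Definition T (d:R) : tree bool :=
  Dec P1 true [Dec P2 false [Dec P1 true [Leaf 1 1; Leaf (3/2) 0]; Leaf d d]; Leaf 0 0].
Definition Gm d := Game bool bool_dec (T d).
Definition e0 (a : nat) : R := match a with O => 1 | _ => 0 end.
Definition e1 (a : nat) : R := match a with 1%nat => 1 | _ => 0 end.

Lemma derive_eval f x l : is_derive f x l -> Derive f x = l.
Proof. intro H. apply is_derive_unique. exact H. Qed.

Ltac dsimp H := unfold U, set_coord, set_infoset, set_player in H; simpl in H;
  erewrite derive_eval in H by (auto_derive; [exact I | reflexivity]).

Ltac enum Hs :=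
  lazymatch type of Hs with
  | subtree _ ?p = _ =>
      destruct p as [|?k ?p]; simpl in Hs;
      [ | destruct k as [|[|[|?k]]]; simpl in Hs; try discriminate; try (enum Hs)]
  end.

Lemma e0_distr : is_distr 2 e0.
Proof. split; [intros [|[|a]] _; simpl; lra | unfold sum_lt; simpl; lra]. Qed.
Lemma e1_distr : is_distr 2 e1.
Proof. split; [intros [|[|a]] _; simpl; lra | unfold sum_lt; simpl; lra]. Qed.

Lemma beh2 G i s I : behavioral G i s -> is_infoset G i I 2 ->
  0 <= s I 0%nat /\ 0 <= s I 1%nat /\ s I 0%nat + s I 1%nat = 1.
Proof.
  intros Hb Hi. destruct (Hb I 2%nat Hi) as [Hn Hs].
  unfold sum_lt in Hs; simpl in Hs.
  repeat split; [apply Hn; auto | apply Hn; auto | lra].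
Qed.

Definition Dv G i (pi : profile G) I a :=
  Derive (fun t => U G i (set_coord G pi i I a t)) (pi i I a).

Lemma kkt2 G i pi I : KKT_point G i pi -> is_infoset G i I 2 ->
  0 <= pi i I 0%nat /\ 0 <= pi i I 1%nat /\ pi i I 0%nat + pi i I 1%nat = 1 /\
  (0 < pi i I 0%nat -> Dv G i pi I 1 <= Dv G i pi I 0) /\
  (0 < pi i I 1%nat -> Dv G i pi I 0 <= Dv G i pi I 1).
Proof.
  intros [Hb [lam [mu Hk]]] Hi.
  destruct (beh2 _ _ _ _ Hb Hi) as [A [B C]].
  destruct (Hk I 2%nat Hi 0%nat ltac:(auto)) as [m0 [z0 d0]].
  destruct (Hk I 2%nat Hi 1%nat ltac:(auto)) as [m1 [z1 d1]].
  unfold Dv. repeat split; auto.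
  - intro P. assert (mu I 0%nat = 0) by nra. lra.
  - intro P. assert (mu I 1%nat = 0) by nra. lra.
Qed.

Lemma nash_edt G pi : wf_game G -> nash_eq G pi -> edt_eq G pi.
Proof.
  intros [_ [_ [_ W]]] [V N]. split; [exact V|].
  intros i I n Hi sigma Hs. unfold set_infoset. apply N.
  intros J m HJ. destruct (lab_dec G J I) as [e|e].
  - subst J. destruct Hi as [p1 [c1 [h1 l1]]]. destruct HJ as [p2 [c2 [h2 l2]]].
    destruct (W _ _ _ _ _ _ _ h1 h2) as [_ L]. subst. rewrite <- L. exact Hs.
  - apply (V i J m HJ).
Qed.

Section Game.
Variable d : R.
Hypothesis d0 : 0 < d.
Hypothesis d1 : d < 1.

Lemma wfG : wf_game (Gm d).
Proof.
  split; [|split; [|split]].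
  - intros p o I ch Hs. simpl in Hs. enum Hs; unfold T in Hs; try discriminate Hs;
      injection Hs; intros; subst; discriminate.
  - intros p bs Hs. simpl in Hs. enum Hs; unfold T in Hs; discriminate.
  - intros p u1 u2 Hs. simpl in Hs. enum Hs; unfold T in Hs; try discriminate; injection Hs; intros; subst; lra.
  - intros p1 p2 o1 o2 I ch1 ch2 H1 H2. simpl in H1, H2.
    enum H1; unfold T in H1; try discriminate H1; injection H1; intros; subst;
    enum H2; unfold T in H2; try discriminate H2; injection H2; intros; subst;
      try discriminate; split; reflexivity.
Qed.


Lemma wfP : wf_game (pr1 (Gm d)).
Proof.
  split; [|split; [|split]].
  - intros p o I ch Hs. simpl in Hs. enum Hs; try discriminate Hs;
      injection Hs; intros; subst; discriminate.
  - intros p bs Hs. simpl in Hs. enum Hs; discriminate.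
  - intros p u1 u2 Hs. simpl in Hs. enum Hs; try discriminate; injection Hs; intros; subst; lra.
  - intros p1 p2 o1 o2 I ch1 ch2 H1 H2. simpl in H1, H2.
    enum H1; try discriminate H1; injection H1; intros; subst;
    enum H2; try discriminate H2; injection H2; intros; subst;
      try discriminate; split; reflexivity.
Qed.

Lemma infG i I n : is_infoset (Gm d) i I n ->
  n = 2%nat /\ ((i = P1 /\ I = true) \/ (i = P2 /\ I = false)).
Proof.
  intros [p [ch [Hs Hl]]]. simpl in Hs.
  enum Hs; unfold T in Hs; try discriminate Hs; injection Hs; intros; subst; auto.
Qed.

Lemma infP i I n : is_infoset (pr1 (Gm d)) i I n ->
  n = 2%nat /\ ((i = P1 /\ I = (true, [])) \/ (i = P1 /\ I = (true, [(true, 0%nat)]))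
               \/ (i = P2 /\ I = (false, []))).
Proof.
  intros [p [ch [Hs Hl]]]. simpl in Hs.
  enum Hs; try discriminate Hs; injection Hs; intros; subst; auto.
Qed.

Lemma iG1 : is_infoset (Gm d) P1 true 2.
Proof. exists [], [Dec P2 false [Dec P1 true [Leaf 1 1; Leaf (3/2) 0]; Leaf d d]; Leaf 0 0]. split; reflexivity. Qed.
Lemma iG2 : is_infoset (Gm d) P2 false 2.
Proof. exists [0%nat], [Dec P1 true [Leaf 1 1; Leaf (3/2) 0]; Leaf d d]. split; reflexivity. Qed.
Lemma iPa : is_infoset (pr1 (Gm d)) P1 (true, []) 2.
Proof. exists []. eexists. split; reflexivity. Qed.
Lemma iPb : is_infoset (pr1 (Gm d)) P1 (true, [(true, 0%nat)]) 2.
Proof. exists [0%nat; 0%nat]. eexists. split; reflexivity. Qed.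
Lemma iPc : is_infoset (pr1 (Gm d)) P2 (false, []) 2.
Proof. exists [0%nat]. eexists. split; reflexivity. Qed.

Definition pi0 : profile (Gm d) := fun i J a => e0 a.

Lemma cdt0 : cdt_eq (Gm d) pi0.
Proof.
  intros i. split.
  - intros I n Hi. destruct (infG _ _ _ Hi) as [-> _]. exact e0_distr.
  - destruct i.
    + exists (fun _ => 2), (fun _ a => match a with O => 0 | _ => 1/2 end).
      intros I n Hi a Ha. destruct (infG _ _ _ Hi) as [-> [[_ ->]|[E _]]]; [|discriminate].
      destruct a as [|[|a]]; [| |lia];
      unfold U, set_coord, set_infoset, set_player, pi0; simpl;
      (erewrite derive_eval; [|auto_derive; [exact I|reflexivity]]); simpl; lra.
    + exists (fun _ => 1), (fun _ a => match a with O => 0 | _ => 1 - d end).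
      intros I n Hi a Ha. destruct (infG _ _ _ Hi) as [-> [[E _]|[_ ->]]]; [discriminate|].
      destruct a as [|[|a]]; [| |lia];
      unfold U, set_coord, set_infoset, set_player, pi0; simpl;
      (erewrite derive_eval; [|auto_derive; [exact I|reflexivity]]); simpl; lra.
Qed.


Ltac dall H := unfold Dv, U, set_coord, set_infoset, set_player in H; simpl in H;
  repeat (erewrite derive_eval in H by (auto_derive; [exact I | reflexivity])).

Lemma cdtG pi : cdt_eq (Gm d) pi ->
  pi P1 true 0%nat = 1 /\ pi P1 true 1%nat = 0 /\ pi P2 false 0%nat = 1 /\ pi P2 false 1%nat = 0.
Proof.
  intros H.
  destruct (kkt2 _ _ _ _ (H P1) iG1) as [a0 [a1 [as_ [i0 i1]]]].
  destruct (kkt2 _ _ _ _ (H P2) iG2) as [b0 [b1 [bs [j0 j1]]]].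
  dall i0. dall i1. dall j0. dall j1.
  set (x0 := pi P1 true 0%nat) in *. set (x1 := pi P1 true 1%nat) in *.
  set (y0 := pi P2 false 0%nat) in *. set (y1 := pi P2 false 1%nat) in *.
  assert (X1 : x1 = 0).
  { destruct (Rlt_or_le 0 x1) as [P|P]; [|lra]. specialize (i1 P).
    assert (y0 * x1 >= 0) by nra. assert (x0 * y0 >= 0) by nra.
    assert (y1 * d <= 0) by nra. assert (y1 <= 0) by nra.
    assert (y0 = 1) by lra. subst y0. nra. }
  assert (X0 : x0 = 1) by lra.
  assert (Y1 : y1 = 0).
  { destruct (Rlt_or_le 0 y1) as [P|P]; [|lra]. specialize (j1 P).
    rewrite X0 in j1. nra. }
  repeat split; lra.
Qed.

Lemma cdtP pi : cdt_eq (pr1 (Gm d)) pi ->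
  U _ P1 pi = d /\ U _ P2 pi = d.
Proof.
  intros H.
  destruct (kkt2 _ _ _ _ (H P1) iPa) as [a0 [a1 [as_ [i0 i1]]]].
  destruct (kkt2 _ _ _ _ (H P1) iPb) as [b0 [b1 [bs [j0 j1]]]].
  destruct (kkt2 _ _ _ _ (H P2) iPc) as [c0 [c1 [cs [k0 k1]]]].
  dall i0. dall i1. dall j0. dall j1. dall k0. dall k1.
  unfold U; simpl.
  simpl in *.
  set (x0 := pi P1 ((true, []) : bool * list (bool * nat)) 0%nat) in *.
  set (x1 := pi P1 ((true, []) : bool * list (bool * nat)) 1%nat) in *.
  set (z0 := pi P1 ((true, [(true, 0%nat)]) : bool * list (bool * nat)) 0%nat) in *.
  set (z1 := pi P1 ((true, [(true, 0%nat)]) : bool * list (bool * nat)) 1%nat) in *.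
  set (y0 := pi P2 ((false, []) : bool * list (bool * nat)) 0%nat) in *.
  set (y1 := pi P2 ((false, []) : bool * list (bool * nat)) 1%nat) in *.
  assert (X1 : x1 = 0).
  { destruct (Rlt_or_le 0 x1) as [P|P]; [|lra]. specialize (i1 P).
    assert (y0 * z0 >= 0) by nra. assert (y0 * z1 >= 0) by nra. assert (y1 * d >= 0) by nra.
    assert (y0 * z0 + y0 * z1 + y1 * d > 0).
    { assert (y0 * z0 + y0 * z1 = y0) by nra.
      destruct (Rlt_or_le 0 y0); [nra|]. assert (y1 > 0) by lra. nra. }
    nra. }
  assert (X0 : x0 = 1) by lra.
  assert (Y0 : y0 = 0).
  { destruct (Rlt_or_le 0 y0) as [P|P]; [|lra]. specialize (k0 P).
    rewrite X0 in k0. assert (z0 > 0) by nra. specialize (j0 H0). rewrite X0 in j0. nra. }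
  assert (Y1 : y1 = 1) by lra.
  rewrite X0, X1, Y0, Y1. split; ring.
Qed.

Lemma reach_eq (pi pi' : profile (Gm d)) :
  pi P1 true 0%nat = pi' P1 true 0%nat -> pi P1 true 1%nat = pi' P1 true 1%nat ->
  pi P2 false 0%nat = pi' P2 false 0%nat -> pi P2 false 1%nat = pi' P2 false 1%nat ->
  forall p, reach pi (T d) p = reach pi' (T d) p.
Proof.
  intros E1 E2 E3 E4 p.
  destruct p as [|[|[|[|k]]] p]; simpl; try reflexivity.
  - rewrite E1; f_equal. destruct p as [|[|[|[|k]]] p]; simpl; try reflexivity.
    + rewrite E3; f_equal. destruct p as [|[|[|[|k]]] p]; simpl; try reflexivity.
      * rewrite E1; f_equal; destruct p; reflexivity.
      * rewrite E2; f_equal; destruct p; reflexivity.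
    + rewrite E4; f_equal; destruct p; reflexivity.
  - rewrite E2; f_equal; destruct p; reflexivity.
Qed.

Lemma edtG pi : edt_eq (Gm d) pi -> U (Gm d) P1 pi = 1.
Proof.
  intros [V H].
  destruct (beh2 _ _ _ _ (V P1) iG1) as [a0 [a1 as_]].
  destruct (beh2 _ _ _ _ (V P2) iG2) as [b0 [b1 bs]].
  pose proof (H P1 true 2%nat iG1 e0 e0_distr) as H1.
  pose proof (H P2 false 2%nat iG2 e0 e0_distr) as H2.
  unfold U, set_infoset, set_player in *; simpl in *.
  set (x0 := pi P1 true 0%nat) in *. set (x1 := pi P1 true 1%nat) in *.
  set (y0 := pi P2 false 0%nat) in *. set (y1 := pi P2 false 1%nat) in *.
  assert (X0 : x0 = 1).
  { assert (F : (1 - x0) * (y0 * (1 - x0 / 2) + y1 * d) <= 0).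
    { replace x1 with (1 - x0) in H1 by lra. nra. }
    assert (y0 * (1 - x0 / 2) + y1 * d > 0).
    { destruct (Rlt_or_le 0 y0); [nra|]. assert (y1 > 0) by lra. nra. }
    nra. }
  assert (X1 : x1 = 0) by lra.
  rewrite X0, X1 in H2.
  assert (Y1 : y1 = 0) by nra.
  assert (Y0 : y0 = 1) by lra.
  rewrite X0, X1, Y0, Y1. ring.
Qed.

Lemma edtP pi : edt_eq (pr1 (Gm d)) pi -> U _ P1 pi = d.
Proof.
  intros [V H].
  destruct (beh2 _ _ _ _ (V P1) iPa) as [a0 [a1 as_]].
  destruct (beh2 _ _ _ _ (V P1) iPb) as [b0 [b1 bs]].
  destruct (beh2 _ _ _ _ (V P2) iPc) as [c0 [c1 cs]].
  pose proof (H P1 _ 2%nat iPa e0 e0_distr) as H1.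
  pose proof (H P2 _ 2%nat iPc e1 e1_distr) as H2.
  pose proof (H P1 _ 2%nat iPb e1 e1_distr) as H3.
  unfold U, set_infoset, set_player in *; simpl in *.
  simpl in *.
  set (x0 := pi P1 ((true, []) : bool * list (bool * nat)) 0%nat) in *.
  set (x1 := pi P1 ((true, []) : bool * list (bool * nat)) 1%nat) in *.
  set (z0 := pi P1 ((true, [(true, 0%nat)]) : bool * list (bool * nat)) 0%nat) in *.
  set (z1 := pi P1 ((true, [(true, 0%nat)]) : bool * list (bool * nat)) 1%nat) in *.
  set (y0 := pi P2 ((false, []) : bool * list (bool * nat)) 0%nat) in *.
  set (y1 := pi P2 ((false, []) : bool * list (bool * nat)) 1%nat) in *.
  assert (X0 : x0 = 1).
  { assert (y0 * z0 + 3/2 * y0 * z1 + y1 * d > 0).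
    { destruct (Rlt_or_le 0 y0); [nra|]. assert (y1 > 0) by lra. nra. }
    nra. }
  rewrite X0 in H2, H3.
  assert (y0 * z0 = 0) by nra.
  assert (Y0 : y0 = 0) by nra.
  assert (Y1 : y1 = 1) by lra.
  rewrite X0, Y0, Y1. ring.
Qed.

End Game.

Lemma UG1 d (pi : profile (Gm d)) :
  pi P1 true 0%nat = 1 -> pi P1 true 1%nat = 0 -> pi P2 false 0%nat = 1 -> pi P2 false 1%nat = 0 ->
  U (Gm d) P1 pi = 1 /\ U (Gm d) P2 pi = 1.
Proof. intros A B C D. unfold U; simpl. rewrite A, B, C, D. split; ring. Qed.

Lemma scG SC d (d0 : 0 < d) (d1 : d < 1) pi : sc_eq SC (Gm d) pi -> U (Gm d) P1 pi = 1.
Proof.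
  intros H. destruct SC; simpl in H.
  all: try (destruct (cdtG d d0 d1 pi H) as [A [B [C D]]]; exact (proj1 (UG1 d pi A B C D))).
  all: try (apply (edtG d d0 d1 pi H)).
  all: apply (edtG d d0 d1 pi); apply nash_edt; [apply wfG; assumption | exact H].
Qed.

Lemma scP SC d (d0 : 0 < d) (d1 : d < 1) pi : sc_eq SC (pr1 (Gm d)) pi -> U _ P1 pi = d.
Proof.
  intros H. destruct SC; simpl in H.
  all: try (exact (proj1 (cdtP d d0 d1 pi H))).
  all: try (apply (edtP d d0 d1 pi H)).
  all: apply (edtP d d0 d1 pi); apply nash_edt; [apply wfP; assumption | exact H].
Qed.

Theorem proposition2 :
  forall eps : R, 0 < eps ->
  exists G : game,
    wf_game G /\
    (* unique CDT equilibrium up to realization equivalence *)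
    (exists pi0 : profile G, cdt_eq G pi0 /\
       forall pi : profile G, cdt_eq G pi -> realization_equiv G pi0 pi) /\
    (* utility ratios *)
    (forall (pi : profile G) (pi' : profile (pr1 G)) (i : player),
       cdt_eq G pi -> cdt_eq (pr1 G) pi' ->
       0 < U G i pi /\ U (pr1 G) i pi' / U G i pi <= eps) /\
    (* in particular, VoR^SC(G) <= eps (whenever defined), for all six SC *)
    (forall (SC : sol_concept) (r : R), VoR SC G r -> r <= eps).
Proof.
  intros eps Heps.
  set (d := Rmin eps (1/2)).
  assert (d0 : 0 < d) by (unfold d; apply Rmin_glb_lt; lra).
  assert (d1 : d < 1) by (unfold d; pose proof (Rmin_r eps (1/2)); lra).
  assert (de : d <= eps) by (apply Rmin_l).
  clearbody d.
  exists (Gm d). split; [apply wfG; assumption|]. split; [|split].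
  - exists (pi0 d). split; [apply cdt0; assumption|].
    intros pi Hpi p _. destruct (cdtG d d0 d1 pi Hpi) as [A [B [C D]]].
    apply reach_eq; unfold pi0, e0; simpl; lra.
  - intros pi pi' i H H'. destruct (cdtG d d0 d1 pi H) as [A [B [C D]]].
    destruct (UG1 d pi A B C D) as [U1 U2]. destruct (cdtP d d0 d1 pi' H') as [V1 V2].
    destruct i; [rewrite U1, V1 | rewrite U2, V2]; split; try lra;
      unfold Rdiv; rewrite Rinv_1; lra.
  - intros SC r [v [v' [[[pi [Hpi Hv]] _] [[[pi' [Hpi' Hv']] _] [Hv0 Hr]]]]].
    rewrite (scG SC d d0 d1 pi Hpi) in Hv. rewrite (scP SC d d0 d1 pi' Hpi') in Hv'.
    subst. unfold Rdiv; rewrite Rinv_1; lra.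
Qed.
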